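(* Let $\langle B,\wedge,{}'\rangle$ be an algebra with $\wedge$ binary and ${}'$ unary satisfying $x\wedge y\approx y\wedge x$, $x\wedge(y\wedge z)\approx(x\wedge y)\wedge z$, $x''\approx x$, and $x'\approx (x\wedge y)'\wedge(x\wedge y')'$. Then for all $x,y,z\in B$, writing $0=z\wedge z'$, we have $(x\wedge y)'=0'\wedge(x\wedge y\wedge x)'$.
   Context: By associativity, $x\wedge y\wedge x$ is unambiguous. In such an algebra the element $z\wedge z'$ does not depend on $z$; the paper denotes it $0$. *)

From Stdlib Require Import Setoid.

Theorem lemma2p7 (B : Type) (meet : B -> B -> B) (c : B -> B)
  (comm : forall x y, meet x y = meet y x)
  (assoc : forall x y z, meet x (meet y z) = meet (meet x y) z)
  (invol : forall x, c (c x) = x)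
  (ax : forall x y, c x = meet (c (meet x y)) (c (meet x (c y)))) :
  forall x y z : B,
    c (meet x y) = meet (c (meet z (c z))) (c (meet (meet x y) x)).
Proof.
  assert (AC4 : forall a b d e, meet (meet a b) (meet d e) = meet (meet e b) (meet d a)).
  { intros a b d e.
    rewrite (comm e b), <- (assoc b e), (assoc e d a), (comm (meet e d) a).
    rewrite (assoc b a), (comm b a), <- (assoc a b), <- (assoc a b).
    rewrite (assoc b e d), (comm (meet b e) d), (comm b e), (assoc d e b), (comm (meet d e) b).
    reflexivity. }
  assert (K : forall x y, meet x (c x) = meet y (c y)).
  { intros x y.
    assert (Hx1 := ax (c x) y). rewrite invol in Hx1.
    assert (Hx2 := ax x y).
    assert (Hy1 := ax (c y) x). rewrite invol in Hy1.
    assert (Hy2 := ax y x).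
    transitivity (meet (meet (c (meet (c x) y)) (c (meet (c x) (c y))))
                       (meet (c (meet x y)) (c (meet x (c y))))).
    { rewrite <- Hx1, <- Hx2. reflexivity. }
    transitivity (meet (meet (c (meet (c y) x)) (c (meet (c y) (c x))))
                       (meet (c (meet y x)) (c (meet y (c x))))).
    2: { rewrite <- Hy1, <- Hy2. reflexivity. }
    rewrite (comm (c y) x), (comm (c y) (c x)), (comm y x), (comm y (c x)).
    apply AC4. }
  intros a b d.
  set (o := meet d (c d)) in *.
  assert (Ko : forall w, meet w (c w) = o) by (intro w; apply K).
  assert (L0 : forall w, c w = meet (c (meet w w)) (c o)).
  { intro w. assert (H := ax w w). rewrite Ko in H. exact H. }
  assert (E1 : meet (c o) o = o).
  { transitivity (meet (c o) (c (c o))); [ now rewrite invol | apply Ko ]. }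
  assert (E2 : c o = meet (c (meet o o)) (c o)).
  { assert (H := ax o o). rewrite Ko in H. exact H. }
  assert (E3 : meet o o = o).
  { transitivity (meet (meet (c o) o) o); [ now rewrite E1 | ].
    rewrite E2 at 1.
    set (k := c (meet o o)).
    transitivity (meet (c o) (meet (meet o o) k)).
    { rewrite <- !assoc. rewrite (comm k (meet (c o) (meet o o))). rewrite <- !assoc. reflexivity. }
    unfold k. rewrite Ko. exact E1. }
  assert (E4 : meet (c o) (c o) = c o).
  { rewrite E2 at 3. rewrite E3. reflexivity. }
  assert (R1 : forall w, meet w (c o) = w).
  { intro w. rewrite <- (invol w). rewrite (L0 (c w)) at 1.
    rewrite <- assoc, E4. rewrite <- L0. reflexivity. }
  assert (Id : forall w, meet w w = w).
  { intro w. assert (H : c w = c (meet w w)) by (rewrite (L0 w); apply R1).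
    rewrite <- (invol (meet w w)), <- H. apply invol. }
  assert (Z : forall y, meet o y = o).
  { intro y. transitivity (meet (meet y (c y)) y); [ now rewrite Ko | ].
    rewrite <- assoc, (comm (c y) y), assoc, Id. apply Ko. }
  rewrite (ax (meet a b) (c a)), invol.
  rewrite (comm (meet a b) (c a)), assoc, (comm (c a) a), Ko, Z.
  reflexivity.
Qed.
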